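(* Consider the infinite hydrodynamic chain (with $\partial=\partial_x$) $$\partial_{t_2}u^{-k}=\big(k\,u^{-(k+1)}-(k-2)u^{-(k-1)}+u^{-k}u^1\big)\partial u^0+u^0u^{-k}\partial u^1+u^0\big(\partial u^{-(k-1)}+\partial u^{-(k+1)}\big),\quad k>2,$$ $$\partial_{t_2}u^{-2}=\big(u^{-2}u^1+2u^{-3}\big)\partial u^0+u^0u^{-2}\partial u^1+u^0\partial u^{-3}+2u^0\partial u^{-1},$$ $$\partial_{t_2}u^{-1}=\big(u^{-1}u^1+u^{-2}\big)\partial u^0+u^0u^{-1}\partial u^1+u^0\partial u^{-2},$$ $$\partial_{t_2}u^0=u^0u^1\partial u^0+(u^0)^2\partial u^1,$$ $$\partial_{t_2}u^1=\big(2u^2-(u^1)^2\big)\partial u^0-u^0u^1\partial u^1+u^0\partial u^2,$$ $$\partial_{t_2}u^k=\big((k+1)u^{k+1}-(k-1)u^{k-1}-u^ku^1\big)\partial u^0-u^0u^k\partial u^1+u^0\big(\partial u^{k+1}+\partial u^{k-1}\big),\quad k>1,$$ for functions $u^\ell(x,\mathbf{t})$, with initial condition $u^{-k}(x,\mathbf{0})=0$ ($k>1$), $u^{-1}(x,\mathbf{0})=\tfrac12$, $u^0(x,\mathbf{0})=x$, $u^k(x,\mathbf{0})=2$ ($k>0$). If $u^{-k}(x,\mathbf{t})\equiv0$ for all $k>2$, then there exists a reduction of the chain, compatible with this initial condition, of the form $$u^{-2}(x,\mathbf{t})=0,\quad u^{-1}(x,\mathbf{t})=u^{-1}(\mathbf{t}),\quad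 u^0(x,\mathbf{t})=2x\,u^{-1}(\mathbf{t}),\quad u^k(x,\mathbf{t})=u^k(\mathbf{t})\ (k>0),$$ where the functions $u^{-1}(\mathbf{t})$, $u^k(\mathbf{t})$ ($k>0$) solve $$\partial_{t_2}u^{-1}=2(u^{-1})^2u^1,\qquad \partial_{t_2}u^k=2u^{-1}\big((k+1)u^{k+1}-u^1u^k-(k-1)u^{k-1}\big),\quad k>0.$$
   Context: $\mathbf{t}=(t_2,t_4,\dots)$ denotes the even coupling constants; $x\in\mathbb{R}$. *)

(* Defs.v *)
From Stdlib Require Import Reals ZArith Lra.
From Coquelicot Require Import Coquelicot.
Open Scope R_scope.

(* The times t = (t_2, t_4, ...) are encoded as a sequence t : nat -> R with
   t n = t_{2(n+1)}; in particular t_2 = t O. *)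
Definition times := nat -> R.
Definition t0 : times := fun _ => 0.

Definition tupd (t : times) (s : R) : times :=
  fun n => match n with O => s | S _ => t n end.

Definition field := Z -> R -> times -> R.

Definition dx (u : field) (l : Z) (x : R) (t : times) : R :=
  Derive (fun y => u l y t) x.
Definition dt2 (u : field) (l : Z) (x : R) (t : times) : R :=
  Derive (fun s => u l x (tupd t s)) (t O).

Definition chain_t2 (u : field) : Prop :=
  (forall l x t, ex_derive (fun y => u l y t) x /\
                 ex_derive (fun s => u l x (tupd t s)) (t O)) /\
  forall x t,
  (forall k : Z, (k > 2)%Z ->
     dt2 u (- k) x t =
       (IZR k * u (- (k + 1))%Z x t - (IZR k - 2) * u (- (k - 1))%Z x t
          + u (- k)%Z x t * u 1%Z x t) * dx u 0 x t
       + u 0%Z x t * u (- k)%Z x t * dx u 1 x t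
       + u 0%Z x t * (dx u (- (k - 1)) x t + dx u (- (k + 1)) x t)) /\
  dt2 u (-2) x t =
     (u (-2)%Z x t * u 1%Z x t + 2 * u (-3)%Z x t) * dx u 0 x t
     + u 0%Z x t * u (-2)%Z x t * dx u 1 x t
     + u 0%Z x t * dx u (-3) x t + 2 * u 0%Z x t * dx u (-1) x t /\
  dt2 u (-1) x t =
     (u (-1)%Z x t * u 1%Z x t + u (-2)%Z x t) * dx u 0 x t
     + u 0%Z x t * u (-1)%Z x t * dx u 1 x t
     + u 0%Z x t * dx u (-2) x t /\
  dt2 u 0 x t =
     u 0%Z x t * u 1%Z x t * dx u 0 x t + (u 0%Z x t) ^ 2 * dx u 1 x t /\
  dt2 u 1 x t =
     (2 * u 2%Z x t - (u 1%Z x t) ^ 2) * dx u 0 x t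
     - u 0%Z x t * u 1%Z x t * dx u 1 x t + u 0%Z x t * dx u 2 x t /\
  (forall k : Z, (k > 1)%Z ->
     dt2 u k x t =
       ((IZR k + 1) * u (k + 1)%Z x t - (IZR k - 1) * u (k - 1)%Z x t
          - u k x t * u 1%Z x t) * dx u 0 x t
       - u 0%Z x t * u k x t * dx u 1 x t
       + u 0%Z x t * (dx u (k + 1) x t + dx u (k - 1) x t)).

Definition initial_condition (u : field) : Prop :=
  forall x,
    (forall k : Z, (k > 1)%Z -> u (- k)%Z x t0 = 0) /\
    u (-1)%Z x t0 = 1 / 2 /\
    u 0%Z x t0 = x /\
    (forall k : Z, (k > 0)%Z -> u k x t0 = 2).

(* the reduction ansatz built from u^{-1}(t) = a t and u^k(t) = b k t (k > 0):
   u^{-k} = 0 (k >= 2), u^{-1} = a, u^0 = 2 x a, u^k = b k. *)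
Definition reduction (a : times -> R) (b : nat -> times -> R) : field :=
  fun l x t =>
    if (l <=? -2)%Z then 0
    else if (l =? -1)%Z then a t
    else if (l =? 0)%Z then 2 * x * a t
    else b (Z.to_nat l) t.

(* Main.v *)
Require Import Defs.
From Stdlib Require Import Reals ZArith Lra Lia.
From Coquelicot Require Import Coquelicot.
Open Scope R_scope.

Section S.
Variables (a : times -> R) (b : nat -> times -> R).

Lemma red_neg l x t : (l <= -2)%Z -> reduction a b l x t = 0.
Proof. intro H. unfold reduction. now rewrite (proj2 (Z.leb_le _ _) H). Qed.
Lemma red_m1 x t : reduction a b (-1)%Z x t = a t.
Proof. reflexivity. Qed.
Lemma red_0 x t : reduction a b 0%Z x t = 2 * x * a t.
Proof. reflexivity. Qed.
Lemma red_pos l x t : (l >= 1)%Z -> reduction a b l x t = b (Z.to_nat l) t.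
Proof.
  intro H. unfold reduction.
  rewrite (proj2 (Z.leb_gt _ _)) by lia.
  rewrite (proj2 (Z.eqb_neq _ _)) by lia.
  rewrite (proj2 (Z.eqb_neq _ _)) by lia. reflexivity.
Qed.

Lemma dx_ne0 l x t : l <> 0%Z -> dx (reduction a b) l x t = 0.
Proof.
  intro H. unfold dx.
  destruct (Z_le_gt_dec l (-2)).
  - rewrite (Derive_ext _ (fun _ => 0)) by (intros; now apply red_neg). apply Derive_const.
  - destruct (Z.eq_dec l (-1)).
    + subst. rewrite (Derive_ext _ (fun _ => a t)) by reflexivity. apply Derive_const.
    + rewrite (Derive_ext _ (fun _ => b (Z.to_nat l) t)) by (intros; apply red_pos; lia).
      apply Derive_const.
Qed.

Lemma dx_0 x t : dx (reduction a b) 0 x t = 2 * a t.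
Proof.
  unfold dx. apply is_derive_unique. simpl.
  unfold reduction; simpl. auto_derive; auto. ring.
Qed.

Lemma exdx l x t : ex_derive (fun y => reduction a b l y t) x.
Proof.
  destruct (Z.eq_dec l 0).
  - subst. unfold reduction; simpl. auto_derive; auto.
  - destruct (Z_le_gt_dec l (-2)).
    + apply (ex_derive_ext (fun _ => 0)). intros; symmetry; now apply red_neg. apply ex_derive_const.
    + destruct (Z.eq_dec l (-1)).
      * subst. apply (ex_derive_ext (fun _ => a t)); [reflexivity|apply ex_derive_const].
      * apply (ex_derive_ext (fun _ => b (Z.to_nat l) t)). intros; symmetry; apply red_pos; lia.
        apply ex_derive_const.
Qed.

Hypothesis Ha : forall t, is_derive (fun s => a (tupd t s)) (t O)
                 (2 * (a t) ^ 2 * b 1%nat t).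
Hypothesis Hb : forall (k : nat) t, (k > 0)%nat ->
       is_derive (fun s => b k (tupd t s)) (t O)
         (2 * a t * ((INR k + 1) * b (S k) t - b 1%nat t * b k t
                     - (INR k - 1) * b (Nat.pred k) t)).

Lemma dt_neg l x t : (l <= -2)%Z -> dt2 (reduction a b) l x t = 0.
Proof.
  intro H. unfold dt2.
  rewrite (Derive_ext _ (fun _ => 0)) by (intros; now apply red_neg). apply Derive_const.
Qed.
Lemma dt_m1 x t : dt2 (reduction a b) (-1) x t = 2 * (a t) ^ 2 * b 1%nat t.
Proof. unfold dt2. apply is_derive_unique. apply Ha. Qed.
Lemma dt_0 x t : dt2 (reduction a b) 0 x t = 2 * x * (2 * (a t) ^ 2 * b 1%nat t).
Proof.
  unfold dt2. apply is_derive_unique. simpl. unfold reduction; simpl.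
  apply (is_derive_scal (fun s => a (tupd t s))). apply Ha.
Qed.
Lemma dt_pos l x t : (l >= 1)%Z -> dt2 (reduction a b) l x t =
  2 * a t * ((INR (Z.to_nat l) + 1) * b (S (Z.to_nat l)) t - b 1%nat t * b (Z.to_nat l) t
                     - (INR (Z.to_nat l) - 1) * b (Nat.pred (Z.to_nat l)) t).
Proof.
  intro H. unfold dt2.
  rewrite (Derive_ext _ (fun s => b (Z.to_nat l) (tupd t s))) by (intros; apply red_pos; lia).
  apply is_derive_unique. apply Hb. lia.
Qed.

Lemma exdt l x t : ex_derive (fun s => reduction a b l x (tupd t s)) (t O).
Proof.
  destruct (Z_le_gt_dec l (-2)).
  - apply (ex_derive_ext (fun _ => 0)). intros; symmetry; now apply red_neg. apply ex_derive_const.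
  - destruct (Z.eq_dec l (-1)).
    + subst. eexists. apply Ha.
    + destruct (Z.eq_dec l 0).
      * subst. eexists. unfold reduction; simpl.
        apply (is_derive_scal (fun s => a (tupd t s))). apply Ha.
      * apply (ex_derive_ext (fun s => b (Z.to_nat l) (tupd t s))).
        intros; symmetry; apply red_pos; lia.
        eexists. apply Hb. lia.
Qed.
End S.

Theorem theorem5p2 :
  forall (a : times -> R) (b : nat -> times -> R),
    (forall t, is_derive (fun s => a (tupd t s)) (t O)
                 (2 * (a t) ^ 2 * b 1%nat t)) ->
    (forall (k : nat) t, (k > 0)%nat ->
       is_derive (fun s => b k (tupd t s)) (t O)
         (2 * a t * ((INR k + 1) * b (S k) t - b 1%nat t * b k t
                     - (INR k - 1) * b (Nat.pred k) t))) ->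
    a t0 = 1 / 2 ->
    (forall k : nat, (k > 0)%nat -> b k t0 = 2) ->
    let u := reduction a b in
    (forall k : Z, (k > 2)%Z -> forall x t, u (- k)%Z x t = 0) /\
    chain_t2 u /\ initial_condition u.
Proof.
  intros a b Ha Hb Ha0 Hb0 u. subst u.
  split; [|split].
  - intros k Hk x t. apply red_neg. lia.
  - split.
    + intros l x t. split; [apply exdx | apply exdt; assumption].
    + intros x t. split; [|split; [|split; [|split; [|split]]]].
      * intros k Hk.
        rewrite dt_neg by lia.
        rewrite !(red_neg a b (- _)%Z) by lia.
        rewrite !(dx_ne0 a b (- _)%Z) by lia.
        rewrite dx_0, dx_ne0 by lia. ring.
      * rewrite dt_neg by lia. rewrite (red_neg a b (-2)), (red_neg a b (-3)) by lia.
        rewrite dx_0, !dx_ne0 by lia. ring.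
      * rewrite dt_m1 by assumption. rewrite red_m1, red_0, (red_neg a b (-2)) by lia.
        rewrite red_pos by lia. rewrite dx_0, !dx_ne0 by lia. replace (Z.to_nat 1) with 1%nat by reflexivity. ring.
      * rewrite dt_0 by assumption. rewrite red_0, red_pos by lia.
        rewrite dx_0, !dx_ne0 by lia. replace (Z.to_nat 1) with 1%nat by reflexivity. ring.
      * rewrite dt_pos by (assumption || lia). rewrite red_0, !red_pos by lia.
        rewrite dx_0, !dx_ne0 by lia. change (Z.to_nat 1) with 1%nat; change (Z.to_nat 2) with 2%nat; simpl (S 1); simpl (Nat.pred 1); replace (INR 1) with 1 by reflexivity. ring.
      * intros k Hk. rewrite dt_pos by (assumption || lia).
        rewrite red_0, !red_pos by lia.
        rewrite dx_0, !dx_ne0 by lia.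
        replace (Z.to_nat (k + 1)) with (S (Z.to_nat k)) by lia.
        replace (Z.to_nat (k - 1)) with (Nat.pred (Z.to_nat k)) by lia.
        rewrite INR_IZR_INZ, Z2Nat.id by lia.
        replace (Z.to_nat 1) with 1%nat by reflexivity. ring.
  - intro x. split; [|split; [|split]].
    + intros k Hk. apply red_neg. lia.
    + rewrite red_m1. exact Ha0.
    + rewrite red_0, Ha0. field.
    + intros k Hk. rewrite red_pos by lia. apply Hb0. lia.
Qed.
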